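(* For every $h>2/3$ there is an instance with two groups in which all agents have binary valuations and no allocation is $h$-democratic positive-MMS-fair.
   Context: There is a finite set $G$ of goods and $k$ groups $A_1,\dots,A_k$ of agents ($n_i\ge1$ agents in $A_i$); here $k=2$. An agent $a$ is binary if her utility is additive, $u_a(X)=\sum_{g\in X}u_a(\{g\})$, with $u_a(\{g\})\in\{0,1\}$. An allocation is a partition $(G_1,\dots,G_k)$ of $G$; every agent of $A_i$ gets utility $u_a(G_i)$. $\mathrm{MMS}^k_a(G)$ is the maximum over partitions of $G$ into $k$ sets of the minimum utility of $a$ for a set of the partition. The allocation is positive-MMS-fair for $a\in A_i$ if $\mathrm{MMS}^k_a(G)>0$ implies $u_a(G_i)>0$. For $h\in[0,1]$, an allocation is $h$-democratic fair (for a given individual fairness notion) if for every $i$, at least $h\cdot n_i$ agents of $A_i$ find it fair. *)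

(* Defs.v *)
From HB Require Import structures.
From mathcomp Require Import all_boot all_order all_algebra.
Set Implicit Arguments. Unset Strict Implicit. Unset Printing Implicit Defensive.
Import Order.TTheory GRing.Theory Num.Theory.

Definition bin_util (G : finType) (b : G -> bool) (X : {set G}) : nat :=
  \sum_(g in X) (b g : nat).

(* The i-th bundle of a partition of G into k sets, encoded by f : G -> 'I_k. *)
Definition bundle (G : finType) (k : nat) (f : {ffun G -> 'I_k}) (j : 'I_k)
  : {set G} := [set g | f g == j].

(* The neutral element v [set: G] of the inner minimum
   is irrelevant for k >= 1 (bundles are subsets of G, v is monotone). *)
Definition mms (G : finType) (k : nat) (v : {set G} -> nat) : nat :=
  \max_(f : {ffun G -> 'I_k}) \big[minn/v [set: G]]_(j < k) v (bundle f j).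

Definition pos_mms_fair (G : finType) (k : nat) (v : {set G} -> nat)
  (f : {ffun G -> 'I_k}) (i : 'I_k) : bool :=
  (0 < mms k v)%N ==> (0 < v (bundle f i))%N.

Definition democratic_fair (R : realFieldType) (h : R) (k : nat)
  (n : 'I_k -> nat) (fair : forall i : 'I_k, 'I_(n i) -> bool) : Prop :=
  forall i : 'I_k, (h * (n i)%:R <= (#|[set a | fair i a]|)%:R)%R.

(* Main.v *)
Require Import Defs.
From HB Require Import structures.
From mathcomp Require Import all_boot all_order all_algebra.
From mathcomp Require Import zify.
Import Order.TTheory GRing.Theory Num.Theory.

Lemma key4 : forall a b c d : nat, (a < 3)%N -> (b < 3)%N -> (c < 3)%N -> (d < 3)%N ->
  b <> a -> d <> c -> a <> c -> a <> d -> b <> c -> b <> d -> False.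
Proof. move=> *; lia. Qed.

Lemma util_pos (a g : 'I_3) (X : {set 'I_3}) :
  g \in X -> g != a -> (0 < bin_util (fun g : 'I_3 => g != a) X)%N.
Proof.
move=> gX ga; rewrite /bin_util (bigD1 g) //= ga.
by rewrite add1n.
Qed.

Lemma util_pos_inv (a : 'I_3) (X : {set 'I_3}) :
  (0 < bin_util (fun g : 'I_3 => g != a) X)%N -> exists g, g \in X /\ g != a.
Proof.
rewrite /bin_util => H.
case: (boolP [exists g, (g \in X) && (g != a)]).
  by move/existsP=> [g /andP[??]]; exists g.
move=> /existsPn Hn; move: H; rewrite big1 //= => g gX.
by move: (Hn g); rewrite gX /= => /negbTE ->.
Qed.

Lemma others (a : 'I_3) : exists x y : 'I_3, [/\ x != a, y != a & x != y].
Proof.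
case: a => m Hm; case: m Hm => [|[|[|m]]] Hm.
- by exists (@Ordinal 3 1 isT), (@Ordinal 3 2 isT); split; apply/negP => /eqP/(congr1 val).
- by exists (@Ordinal 3 0 isT), (@Ordinal 3 2 isT); split; apply/negP => /eqP/(congr1 val).
- by exists (@Ordinal 3 0 isT), (@Ordinal 3 1 isT); split; apply/negP => /eqP/(congr1 val).
- by [].
Qed.

Lemma mpos (a : 'I_3) : (0 < mms 2 (bin_util (fun g : 'I_3 => g != a)))%N.
Proof.
have [x [y [xa ya xy]]] := others a.
pose f0 : {ffun 'I_3 -> 'I_2} := [ffun g => if g == x then ord0 else ord_max].
rewrite /mms; apply: (leq_trans _ (leq_bigmax f0)).
rewrite !big_ord_recl big_ord0 /= !leq_min.
apply/and3P; split.
- apply: (@util_pos _ x) => //; by rewrite /bundle inE ffunE eqxx.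
- apply: (@util_pos _ y) => //; rewrite /bundle inE ffunE.
  by rewrite eq_sym in xy; rewrite (negbTE xy).
- by apply: (@util_pos _ x).
Qed.

Local Open Scope ring_scope.

Theorem mainTheorem3 (R : realFieldType) (h : R) :
  2%:R / 3%:R < h -> h <= 1 ->
  exists (G : finType) (n : 'I_2 -> nat)
         (u : forall i : 'I_2, 'I_(n i) -> G -> bool),
    (forall i, (0 < n i)%N) /\
    forall f : {ffun G -> 'I_2},
      ~ @democratic_fair R h 2 n (fun i a => pos_mms_fair (bin_util (u i a)) f i).
Proof.
move=> h23 h1.
exists ('I_3 : finType), (fun _ => 3%N), (fun i (a : 'I_3) (g : 'I_3) => g != a).
split => // f Hd.
have Hall : forall (i : 'I_2) (a : 'I_3), exists g, f g = i /\ g != a.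
  move=> i a; have Hi := Hd i; move: Hi => /=.
  set A := [set a0 | _] => Hi.
  have c2 : (2 < #|A|)%N.
    rewrite -(ltr_nat R); apply: (lt_le_trans _ Hi).
    have -> : (2%:R : R) = 2%:R / 3%:R * 3%:R by rewrite divfK // pnatr_eq0.
    by rewrite ltr_pM2r // ltr0n.
  have AT : A = setT.
    apply/eqP; rewrite eqEcard subsetT cardsT card_ord.
    exact: c2.
  have : a \in A by rewrite AT inE.
  rewrite inE /pos_mms_fair mpos /= => /util_pos_inv [g [gb ga]].
  by exists g; split => //; move: gb; rewrite /bundle inE => /eqP.
have [g0 [f0 _]] := Hall ord0 ord0.
have [g1 [f1 n01]] := Hall ord0 g0.
have [g2 [f2 _]] := Hall ord_max ord0.
have [g3 [f3 n23]] := Hall ord_max g2.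
have ne : forall u v : 'I_3, f u = ord0 -> f v = ord_max -> nat_of_ord u <> nat_of_ord v.
  by move=> u v fu fv /val_inj E; move: fu; rewrite E fv.
have n01' : nat_of_ord g1 <> nat_of_ord g0 by move=> /val_inj E; move: n01; rewrite E eqxx.
have n23' : nat_of_ord g3 <> nat_of_ord g2 by move=> /val_inj E; move: n23; rewrite E eqxx.
exact: (key4 _ _ _ _ (ltn_ord g0) (ltn_ord g1) (ltn_ord g2) (ltn_ord g3) n01' n23'
  (ne _ _ f0 f2) (ne _ _ f0 f3) (ne _ _ f1 f2) (ne _ _ f1 f3)).
Qed.
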